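(* Let $b>0$. Then there exists $h_0\in(0,1)$ such that for all $h\in(0,h_0)$, \[ \mu_1(h,b)\le -h-\frac12h^{3/2}. \]
   Context: Let $\Omega=\{x\in\mathbb R^2:|x|<1\}$, $\mathbf A_0(x_1,x_2)=\frac12(-x_2,x_1)$. For $h>0$ and $b>0$ let \[ \mu_1(h,b)=\inf_{u\in H^1(\Omega),\,u\ne0}\frac{h^2\int_\Omega|(\nabla-ib\mathbf A_0)u|^2\,dx-h^{3/2}\int_{\partial\Omega}|u|^2\,ds}{\|u\|^2_{L^2(\Omega)}}, \] the lowest eigenvalue of the associated self-adjoint operator $\mathcal L_h^b=-(h\nabla-ibh\mathbf A_0)^2$ with the corresponding Robin boundary condition. (Equivalently $\mu_1(h,b)=h^2\lambda_1(b,-h^{-1/2})$.) *)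

(* Defs.v *)
From Stdlib Require Import Reals.
From Coquelicot Require Import Coquelicot.
Open Scope R_scope.

Definition pd1 (f : R -> R -> R) (x y : R) : R := Derive (fun t => f t y) x.
Definition pd2 (f : R -> R -> R) (x y : R) : R := Derive (fun t => f x t) y.

Definition C1_2d (f : R -> R -> R) : Prop :=
  forall x y, ex_derive (fun t => f t y) x /\ ex_derive (fun t => f x t) y /\
              continuity_2d_pt (pd1 f) x y /\ continuity_2d_pt (pd2 f) x y.

Definition admissible (u : R -> R -> C) : Prop :=
  C1_2d (fun x y => Re (u x y)) /\ C1_2d (fun x y => Im (u x y)).

Definition cpd1 (u : R -> R -> C) (x y : R) : C :=
  (pd1 (fun a c => Re (u a c)) x y, pd1 (fun a c => Im (u a c)) x y).
Definition cpd2 (u : R -> R -> C) (x y : R) : C :=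
  (pd2 (fun a c => Re (u a c)) x y, pd2 (fun a c => Im (u a c)) x y).

Definition A0_1 (x1 x2 : R) : R := - x2 / 2.
Definition A0_2 (x1 x2 : R) : R := x1 / 2.

Definition mag_grad_sq (b : R) (u : R -> R -> C) (x y : R) : R :=
  (Cmod (Cminus (cpd1 u x y) (Cmult (Cmult Ci (RtoC (b * A0_1 x y))) (u x y)))) ^ 2 +
  (Cmod (Cminus (cpd2 u x y) (Cmult (Cmult Ci (RtoC (b * A0_2 x y))) (u x y)))) ^ 2.

Definition int_disk (g : R -> R -> R) : R :=
  RInt (fun x => RInt (fun y => g x y) (- sqrt (1 - x ^ 2)) (sqrt (1 - x ^ 2))) (-1) 1.

(* Integral over the boundary circle w.r.t. arc length ds (parametrized by angle). *)
Definition int_circle (g : R -> R -> R) : R :=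
  RInt (fun t => g (cos t) (sin t)) 0 (2 * PI).

Definition rayleigh (h b : R) (u : R -> R -> C) : R :=
  (h ^ 2 * int_disk (mag_grad_sq b u)
   - Rpower h (3 / 2) * int_circle (fun x y => (Cmod (u x y)) ^ 2))
  / int_disk (fun x y => (Cmod (u x y)) ^ 2).

Definition mu1 (h b : R) : Rbar :=
  Glb_Rbar (fun q => exists u : R -> R -> C,
    admissible u /\ 0 < int_disk (fun x y => (Cmod (u x y)) ^ 2) /\ q = rayleigh h b u).

(* Main.v *)
Require Import Defs.
From Stdlib Require Import Reals Lra Psatz Nsatz ZArith Lia.
From Coquelicot Require Import Coquelicot.
Open Scope R_scope.

Definition uF (n : nat) (y : R) : R := (1 + y) ^ n.
Definition ut (b : R) (n : nat) (x y : R) : C :=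
  (uF n y * cos (b * x / 2), - (uF n y * sin (b * x / 2))).

Lemma pd1_re b n x y : pd1 (fun a c => Re (ut b n a c)) x y = - (uF n y * (b/2 * sin (b * x / 2))).
Proof.
  unfold pd1, ut, uF; simpl. apply is_derive_unique. auto_derive; auto. unfold Rdiv; ring.
Qed.
Lemma pd1_im b n x y : pd1 (fun a c => Im (ut b n a c)) x y = - (uF n y * (b/2 * cos (b * x / 2))).
Proof.
  unfold pd1, ut, uF; simpl. apply is_derive_unique. auto_derive; auto. unfold Rdiv; ring.
Qed.
Lemma pd2_re b n x y : pd2 (fun a c => Re (ut b n a c)) x y = INR n * (1+y)^(pred n) * cos (b * x / 2).
Proof.
  unfold pd2, ut, uF; simpl. apply is_derive_unique. auto_derive; auto. unfold Rdiv; ring.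
Qed.
Lemma pd2_im b n x y : pd2 (fun a c => Im (ut b n a c)) x y = - (INR n * (1+y)^(pred n) * sin (b * x / 2)).
Proof.
  unfold pd2, ut, uF; simpl. apply is_derive_unique. auto_derive; auto. unfold Rdiv; ring.
Qed.

Lemma cpt_of_derive (f : R -> R) z : ex_derive f z -> continuity_pt f z.
Proof. intro H. apply continuity_pt_filterlim. exact (@ex_derive_continuous R_AbsRing R_NormedModule f z H). Qed.

Lemma c2_y (f : R -> R) x y : (forall z, ex_derive f z) -> continuity_2d_pt (fun _ v => f v) x y.
Proof. intro H. apply (continuity_1d_2d_pt_comp f (fun _ v => v)). apply cpt_of_derive, H. apply continuity_2d_pt_id2. Qed.
Lemma c2_x (f : R -> R) x y : (forall z, ex_derive f z) -> continuity_2d_pt (fun u _ => f u) x y.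
Proof. intro H. apply (continuity_1d_2d_pt_comp f (fun u _ => u)). apply cpt_of_derive, H. apply continuity_2d_pt_id1. Qed.

Lemma adm b n : admissible (ut b n).
Proof.
  split; intros x y; repeat split.
  - unfold ut, uF; simpl; auto_derive; auto.
  - unfold ut, uF; simpl; auto_derive; auto.
  - eapply continuity_2d_pt_ext. intros; symmetry; apply pd1_re.
    apply continuity_2d_pt_opp, continuity_2d_pt_mult.
    apply c2_y; intro; unfold uF; auto_derive; auto.
    apply c2_x; intro; auto_derive; auto.
  - eapply continuity_2d_pt_ext. intros; symmetry; apply pd2_re.
    apply continuity_2d_pt_mult.
    apply c2_y; intro; auto_derive; auto.
    apply c2_x; intro; auto_derive; auto.
  - unfold ut, uF; simpl; auto_derive; auto.
  - unfold ut, uF; simpl; auto_derive; auto.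
  - eapply continuity_2d_pt_ext. intros; symmetry; apply pd1_im.
    apply continuity_2d_pt_opp, continuity_2d_pt_mult.
    apply c2_y; intro; unfold uF; auto_derive; auto.
    apply c2_x; intro; auto_derive; auto.
  - eapply continuity_2d_pt_ext. intros; symmetry; apply pd2_im.
    apply continuity_2d_pt_opp, continuity_2d_pt_mult.
    apply c2_y; intro; auto_derive; auto.
    apply c2_x; intro; auto_derive; auto.
Qed.

Lemma cmod_sq (z : C) : Cmod z ^ 2 = fst z ^ 2 + snd z ^ 2.
Proof. unfold Cmod. rewrite pow2_sqrt; auto. apply Rplus_le_le_0_compat; apply pow2_ge_0. Qed.

Lemma ut_mod b n x y : Cmod (ut b n x y) ^ 2 = (1 + y) ^ (2 * n).
Proof.
  rewrite cmod_sq; unfold ut, uF; simpl fst; simpl snd.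
  rewrite Nat.mul_comm, pow_mult.
  pose proof (sin2_cos2 (b*x/2)) as H. unfold Rsqr in H.
  replace (((1+y)^n)^2) with (((1+y)^n)^2 * (sin (b*x/2) * sin (b*x/2) + cos (b*x/2) * cos (b*x/2))) by (rewrite H; ring).
  ring.
Qed.

Lemma mag_eq b n x y : (1 <= n)%nat -> mag_grad_sq b (ut b n) x y =
  (INR n)^2 * (1+y)^(2*n-2) + b^2/4 * ((1-y)^2 + x^2) * (1+y)^(2*n).
Proof.
  intro Hn. unfold mag_grad_sq, cpd1, cpd2.
  rewrite pd1_re, pd1_im, pd2_re, pd2_im, !cmod_sq.
  unfold ut, uF, A0_1, A0_2. simpl fst; simpl snd.
  destruct n as [|m]; [lia|]. simpl pred.
  replace (2 * S m - 2)%nat with (m * 2)%nat by lia.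
  replace (2 * S m)%nat with (S m * 2)%nat by lia.
  rewrite !pow_mult. 
  pose proof (sin2_cos2 (b*x/2)) as H. unfold Rsqr in H.
  set (c := cos (b*x/2)) in *. set (s := sin (b*x/2)) in *.
  set (P := (1+y)^m). simpl (_ ^ S m). fold P.
  transitivity ((INR (S m) ^ 2 * P ^ 2 +
  b ^ 2 / 4 * ((1 - y) ^ 2 + x ^ 2) * ((1 + y) * P) ^ 2) * (s*s+c*c)).
  field. rewrite H; ring.
Qed.
Lemma cderiv (f : R -> R) x : ex_derive f x -> continuous f x.
Proof. intro H. exact (@ex_derive_continuous R_AbsRing R_NormedModule f x H). Qed.
Lemma cplus (f g : R -> R) x : continuous f x -> continuous g x -> continuous (fun t => f t + g t) x.
Proof. intros; exact (continuous_plus f g x H H0). Qed.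
Lemma cmult (f g : R -> R) x : continuous f x -> continuous g x -> continuous (fun t => f t * g t) x.
Proof. intros; exact (continuous_mult f g x H H0). Qed.
Lemma cminus (f g : R -> R) x : continuous f x -> continuous g x -> continuous (fun t => f t - g t) x.
Proof. intros; exact (continuous_minus f g x H H0). Qed.
Lemma ccomp (f g : R -> R) x : continuous f x -> continuous g (f x) -> continuous (fun t => g (f t)) x.
Proof. intros; exact (continuous_comp f g x H H0). Qed.

Definition Sq (x : R) := sqrt (1 - x ^ 2).
Lemma cSq x : continuous Sq x.
Proof. unfold Sq. apply (ccomp (fun x => 1 - x^2) sqrt). apply cderiv; auto_derive; auto. apply continuous_sqrt. Qed.

Section Disk.
Variables (w0 w2 W0 W2 : R -> R).
Hypothesis hW0 : forall y, is_derive W0 y (w0 y).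
Hypothesis hW2 : forall y, is_derive W2 y (w2 y).
Hypothesis hw0 : forall y, ex_derive w0 y.
Hypothesis hw2 : forall y, ex_derive w2 y.

Lemma eW0 y : ex_derive W0 y. Proof. eexists; apply hW0. Qed.
Lemma eW2 y : ex_derive W2 y. Proof. eexists; apply hW2. Qed.

Lemma dW0 y : Derive (fun z : R => W0 z) y = w0 y.
Proof. apply is_derive_unique, hW0. Qed.
Lemma dW2 y : Derive (fun z : R => W2 z) y = w2 y.
Proof. apply is_derive_unique, hW2. Qed.

Definition Hf (x : R) := (W0 (Sq x) - W0 (- Sq x)) + x^2 * (W2 (Sq x) - W2 (- Sq x)).

Lemma inner x : RInt (fun y => w0 y + x^2 * w2 y) (- Sq x) (Sq x) = Hf x.
Proof.
  apply is_RInt_unique.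
  replace (Hf x) with (minus ((fun y => W0 y + x^2 * W2 y) (Sq x)) ((fun y => W0 y + x^2 * W2 y) (- Sq x))).
  2:{ unfold Hf, minus, plus, opp; simpl. ring. }
  apply (is_RInt_derive (V:=R_CompleteNormedModule) (fun y => W0 y + x^2 * W2 y) (fun y => w0 y + x^2 * w2 y)).
  - intros y _. auto_derive. split; [apply eW0|split; [apply eW2|auto]].
    rewrite dW0, dW2. ring.
  - intros z _. apply cderiv. auto_derive. split; [apply hw0|split; [apply hw2|auto]].
Qed.

Lemma cHf x : continuous Hf x.
Proof.
  unfold Hf. apply cplus. apply cminus.
  apply (ccomp Sq W0). apply cSq. apply cderiv, eW0.
  apply (ccomp (fun x => - Sq x) W0). apply (ccomp Sq (fun z => - z)). apply cSq. apply cderiv; auto_derive; auto. apply cderiv, eW0.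
  apply cmult. apply cderiv; auto_derive; auto. apply cminus.
  apply (ccomp Sq W2). apply cSq. apply cderiv, eW2.
  apply (ccomp (fun x => - Sq x) W2). apply (ccomp Sq (fun z => - z)). apply cSq. apply cderiv; auto_derive; auto. apply cderiv, eW2.
Qed.
End Disk.

Section Disk2.
Variables (w0 w2 W0 W2 : R -> R).
Hypothesis hW0 : forall y, is_derive W0 y (w0 y).
Hypothesis hW2 : forall y, is_derive W2 y (w2 y).
Hypothesis hw0 : forall y, ex_derive w0 y.
Hypothesis hw2 : forall y, ex_derive w2 y.

Definition Tf (t : R) := cos t ^ 2 * (w0 (sin t) + w0 (- sin t)) + cos t ^ 4 / 3 * (w2 (sin t) + w2 (- sin t)).
Definition H2f (t : R) := (W0 (sin t) - W0 (- sin t)) + cos t ^ 2 * (W2 (sin t) - W2 (- sin t)).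
Definition Phi (t : R) := - cos t * (W0 (sin t) - W0 (- sin t)) - cos t ^ 3 / 3 * (W2 (sin t) - W2 (- sin t)).

Lemma Sq_cos t : 0 <= t <= PI -> Sq (cos t) = sin t.
Proof.
  intros Ht. unfold Sq. replace (1 - cos t ^ 2) with (sin t ^ 2).
  apply sqrt_pow2. apply sin_ge_0; lra.
  pose proof (sin2_cos2 t). unfold Rsqr in H. nra.
Qed.

Lemma step1 : int_disk (fun x y => w0 y + x^2 * w2 y) = RInt (Hf W0 W2) (-1) 1.
Proof. unfold int_disk. apply RInt_ext. intros x _. apply (inner w0 w2 W0 W2 hW0 hW2 hw0 hw2). Qed.

Lemma step2 : RInt (Hf W0 W2) (-1) 1 = RInt (fun t => sin t * H2f t) 0 PI.
Proof.
  assert (E := RInt_comp (V:=R_CompleteNormedModule) (Hf W0 W2) cos (fun t => - sin t) PI 0).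
  rewrite cos_PI, cos_0 in E. rewrite <- E.
  2:{ intros; apply (cHf w0 w2 W0 W2 hW0 hW2). }
  2:{ intros; split. auto_derive; auto. ring. apply cderiv; auto_derive; auto. }
  assert (Hex : ex_RInt (fun y : R => scal (- sin y) (Hf W0 W2 (cos y))) 0 PI).
  { apply (ex_RInt_continuous (V:=R_CompleteNormedModule)). intros. apply (cmult (fun t => - sin t) (fun t => Hf W0 W2 (cos t))). apply cderiv; auto_derive; auto.
    apply (ccomp cos). apply cderiv; auto_derive; auto. apply (cHf w0 w2 W0 W2 hW0 hW2). }
  rewrite <- opp_RInt_swap by exact Hex.
  rewrite <- RInt_opp by exact Hex. apply RInt_ext. intros t Ht.
  rewrite Rmin_left, Rmax_right in Ht by (pose proof PI_RGT_0; lra).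
  unfold opp, scal; simpl. unfold mult; simpl.
  unfold Hf, H2f. rewrite Sq_cos by lra. ring.
Qed.

Lemma cTf t : continuous Tf t.
Proof. apply cderiv. unfold Tf. auto_derive. repeat split; auto. Qed.

Lemma dPhi t : is_derive Phi t (sin t * H2f t - Tf t).
Proof.
  unfold Phi, H2f, Tf. auto_derive. repeat split; try apply (eW0 w0 W0 hW0); try apply (eW2 w2 W2 hW2); auto.
  rewrite !(dW0 w0 W0 hW0), !(dW2 w2 W2 hW2). field.
Qed.

Lemma step3 : RInt (fun t => sin t * H2f t) 0 PI = RInt Tf 0 PI.
Proof.
  assert (Hd : is_RInt (fun t => sin t * H2f t - Tf t) 0 PI (minus (Phi PI) (Phi 0))).
  { apply (is_RInt_derive (V:=R_CompleteNormedModule) Phi). intros; apply dPhi.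
    intros. apply cderiv. unfold H2f, Tf. auto_derive. repeat split; try apply (eW0 w0 W0 hW0); try apply (eW2 w2 W2 hW2); auto. }
  assert (HP : minus (Phi PI) (Phi 0) = 0).
  { unfold minus, plus, opp; simpl. unfold Phi. rewrite sin_PI, sin_0, Ropp_0. ring. }
  rewrite HP in Hd.
  assert (HexT : ex_RInt Tf 0 PI).
  { apply (ex_RInt_continuous (V:=R_CompleteNormedModule)). intros; apply cTf. }
  transitivity (RInt (fun t => plus (Tf t) (sin t * H2f t - Tf t)) 0 PI).
  { apply RInt_ext. intros. unfold plus; simpl. ring. }
  rewrite (RInt_plus (V:=R_CompleteNormedModule)); [| exact HexT | eexists; exact Hd].
  rewrite (is_RInt_unique _ _ _ _ Hd). unfold plus; simpl. ring.
Qed.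

Lemma disk : int_disk (fun x y => w0 y + x^2 * w2 y) = RInt Tf 0 PI.
Proof. rewrite step1, step2, step3. reflexivity. Qed.
End Disk2.
Definition Pk (k : nat) (t : R) := (1 + sin t) ^ k + (1 - sin t) ^ k.
Definition J (k : nat) : R := RInt (Pk k) 0 PI.

Lemma exPk k : ex_RInt (Pk k) 0 PI.
Proof. apply (ex_RInt_continuous (V:=R_CompleteNormedModule)). intros; apply cderiv; unfold Pk; auto_derive; auto. Qed.

Lemma Jrec m : INR (S m + 1) * J (S (S m)) = INR (2 * S m + 1) * J (S m).
Proof.
  set (k := S m).
  assert (Hd : is_RInt (fun t => INR (2*k+1) * Pk k t - INR (k+1) * Pk (S k) t) 0 PI
     (minus (((1 + sin PI)^k - (1 - sin PI)^k) * cos PI) (((1 + sin 0)^k - (1 - sin 0)^k) * cos 0))).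
  { apply (is_RInt_derive (V:=R_CompleteNormedModule) (fun t => ((1 + sin t)^k - (1 - sin t)^k) * cos t)).
    - intros t _. auto_derive; auto. unfold k, Pk. simpl pred.
      change (match m with 0%nat => 1 | S _ => INR m + 1 end) with (INR (S m)).
      replace (1 + - sin t) with (1 - sin t) by ring.
      rewrite !plus_INR, !mult_INR, !S_INR. simpl INR.
      pose proof (sin2_cos2 t) as H. unfold Rsqr in H.
      set (s := sin t) in *. set (c := cos t) in *. simpl pow.
      set (A := (1+s)^m). set (B := (1-s)^m). nsatz.
    - intros. apply cderiv. unfold Pk; auto_derive; auto. }
  rewrite sin_PI, sin_0 in Hd.
  replace (minus (((1 + 0) ^ k - (1 - 0) ^ k) * cos PI) (((1 + 0) ^ k - (1 - 0) ^ k) * cos 0)) with 0 in Hd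
    by (unfold minus, plus, opp; simpl; replace (1+0) with 1 by ring; replace (1-0) with 1 by ring; ring).
  apply (is_RInt_unique (V:=R_CompleteNormedModule)) in Hd.
  rewrite (RInt_minus (V:=R_CompleteNormedModule)) in Hd.
  2:{ apply (ex_RInt_continuous (V:=R_CompleteNormedModule)). intros; apply cderiv; unfold Pk; auto_derive; auto. }
  2:{ apply (ex_RInt_continuous (V:=R_CompleteNormedModule)). intros; apply cderiv; unfold Pk; auto_derive; auto. }
  rewrite !(RInt_scal (V:=R_CompleteNormedModule)) in Hd by apply exPk.
  unfold J. fold k.
  set (a := INR (2*k+1)) in *. set (bb := INR (k+1)) in *.
  set (I1 := RInt (Pk k) 0 PI) in *. set (I2 := RInt (Pk (S k)) 0 PI) in *.
  unfold minus, plus, opp, scal in Hd; simpl in Hd. unfold mult in Hd; simpl in Hd.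
  lra.
Qed.

Lemma Jrec' k : (1 <= k)%nat -> INR (k + 1) * J (S k) = INR (2 * k + 1) * J k.
Proof. intros Hk. destruct k as [|m]; [lia|]. apply Jrec. Qed.

Lemma J01 : J 0 = 2 * PI /\ J 1 = 2 * PI.
Proof.
  unfold J. split.
  - rewrite (RInt_ext _ (fun _ => 2)). rewrite RInt_const. unfold scal; simpl; unfold mult; simpl. ring.
    intros; unfold Pk; simpl; ring.
  - rewrite (RInt_ext _ (fun _ => 2)). rewrite RInt_const. unfold scal; simpl; unfold mult; simpl. ring.
    intros; unfold Pk; simpl; ring.
Qed.

Lemma Jpos k : 0 < J k.
Proof.
  pose proof PI_RGT_0. destruct J01 as [H0 H1].
  induction k as [|m IH]. lra.
  destruct m. lra.
  pose proof (Jrec m). 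
  assert (0 < INR (S m + 1)) by (apply lt_0_INR; lia).
  assert (0 < INR (2 * S m + 1)) by (apply lt_0_INR; lia).
  nra.
Qed.

Fixpoint LC (l : list (R * nat)) (t : R) : R :=
  match l with nil => 0 | (c, k) :: l' => c * Pk k t + LC l' t end.
Fixpoint LJ (l : list (R * nat)) : R :=
  match l with nil => 0 | (c, k) :: l' => c * J k + LJ l' end.

Lemma cLC l t : continuous (LC l) t.
Proof.
  induction l as [|[c k] l IH]; simpl.
  - apply continuous_const.
  - apply (continuous_plus (fun t => c * Pk k t) (LC l)). apply cderiv; unfold Pk; auto_derive; auto. exact IH.
Qed.

Lemma RInt_LC l : RInt (LC l) 0 PI = LJ l.
Proof.
  induction l as [|[c k] l IH]; simpl.
  - change (LC nil) with (fun _ : R => 0). rewrite RInt_const. unfold scal; simpl; unfold mult; simpl. ring.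
  - rewrite (RInt_plus (V:=R_CompleteNormedModule) (fun t => c * Pk k t) (LC l)).
    rewrite (RInt_scal (V:=R_CompleteNormedModule)) by apply exPk. rewrite IH. unfold J, plus, scal; simpl; unfold mult; simpl. ring.
    apply (ex_RInt_continuous (V:=R_CompleteNormedModule)). intros; apply cderiv; unfold Pk; auto_derive; auto.
    apply (ex_RInt_continuous (V:=R_CompleteNormedModule)). intros; apply cLC.
Qed.

Lemma circle_pow k : RInt (fun t => (1 + sin t) ^ k) 0 (2 * PI) = J k.
Proof.
  pose proof PI_RGT_0.
  assert (Hc : forall a b, ex_RInt (fun t => (1 + sin t) ^ k) a b).
  { intros. apply (ex_RInt_continuous (V:=R_CompleteNormedModule)). intros; apply cderiv; auto_derive; auto. }
  rewrite <- (RInt_Chasles (V:=R_CompleteNormedModule) _ 0 PI (2*PI)) by apply Hc.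
  assert (E := RInt_comp_lin (V:=R_CompleteNormedModule) (fun t => (1 + sin t) ^ k) 1 PI 0 PI).
  replace (1 * 0 + PI) with PI in E by ring. replace (1 * PI + PI) with (2 * PI) in E by ring.
  rewrite <- E by apply Hc.
  rewrite <- (RInt_plus (V:=R_CompleteNormedModule)).
  - unfold J. apply RInt_ext. intros t _. unfold plus, scal, Pk; simpl; unfold mult; simpl.
    replace (1 * t + PI) with (t + PI) by ring. rewrite neg_sin. replace (1 + - sin t) with (1 - sin t) by ring. ring.
  - apply Hc.
  - apply (ex_RInt_continuous (V:=R_CompleteNormedModule)). intros. unfold scal; simpl; unfold mult; simpl. apply cderiv; auto_derive; auto.
Qed.
Definition K2 (N : R) := N ^ 2 / (4 * N - 1).
Definition D2 (N : R) := (4 * N + 1) / ((2 * N + 1) * (2 * N + 2)).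
Definition a3 (N : R) := (4 * N + 1) / (2 * N + 1).
Definition a4 (N : R) := a3 N * (4 * N + 3) / (2 * N + 2).
Definition a5 (N : R) := a4 N * (4 * N + 5) / (2 * N + 3).
Definition a6 (N : R) := a5 N * (4 * N + 7) / (2 * N + 4).
Definition Mb2 (N : R) := 8 * a3 N - 32 / 3 * a4 N + 14 / 3 * a5 N - 2 / 3 * a6 N.
Definition f0 (N e : R) := e ^ 2 * K2 N - e + (1 + e / 2) * D2 N.

Ltac pospoly := repeat (apply Rplus_le_le_0_compat || apply Rmult_le_pos); try lra; try (apply pow_le; lra).

Lemma Q1 N : 10 <= N -> Mb2 N <= 1 / N ^ 2.
Proof.
  intro HN. set (x := N - 10). replace N with (x + 10) by (unfold x; ring).
  assert (Hx : 0 <= x) by (unfold x; lra). clearbody x.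
  assert (E : 1 / (x+10) ^ 2 - Mb2 (x+10) = (8612 + 1870*x + 121*x^2 + 2*x^3) /
     (12751200 + 7095240*x + 1643512*x^2 + 202850*x^3 + 14070*x^4 + 520*x^5 + 8*x^6)).
  { unfold Mb2, a6, a5, a4, a3. field. repeat split; try nra. }
  assert (0 <= (8612 + 1870*x + 121*x^2 + 2*x^3) /
     (12751200 + 7095240*x + 1643512*x^2 + 202850*x^3 + 14070*x^4 + 520*x^5 + 8*x^6)).
  { unfold Rdiv. apply Rmult_le_pos. pospoly. apply Rlt_le, Rinv_0_lt_compat. assert (0 <= 7095240*x + 1643512*x^2 + 202850*x^3 + 14070*x^4 + 520*x^5 + 8*x^6) by pospoly. lra. }
  lra.
Qed.

Lemma Q2 N : 10 <= N -> f0 N (8 / (4 * N + 5)) <= - (1 / (20 * N ^ 3)).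
Proof.
  intro HN. set (x := N - 10). replace N with (x + 10) by (unfold x; ring).
  assert (Hx : 0 <= x) by (unfold x; lra). clearbody x.
  assert (E : - (1 / (20 * (x+10) ^ 3)) - f0 (x+10) (8 / (4 * (x+10) + 5)) =
     (20606775 + 10264735*x + 2034746*x^2 + 200634*x^3 + 9840*x^4 + 192*x^5) /
     (364864500000 + 279664650000*x + 93742605000*x^2 + 17947867500*x^3 + 2146753700*x^4 + 164264680*x^5 + 7852320*x^6 + 214400*x^7 + 2560*x^8)).
  { unfold f0, K2, D2. field. repeat split; try nra. }
  assert (0 <= (20606775 + 10264735*x + 2034746*x^2 + 200634*x^3 + 9840*x^4 + 192*x^5) /
     (364864500000 + 279664650000*x + 93742605000*x^2 + 17947867500*x^3 + 2146753700*x^4 + 164264680*x^5 + 7852320*x^6 + 214400*x^7 + 2560*x^8)).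
  { unfold Rdiv. apply Rmult_le_pos. pospoly. apply Rlt_le, Rinv_0_lt_compat.
    assert (0 <= 279664650000*x + 93742605000*x^2 + 17947867500*x^3 + 2146753700*x^4 + 164264680*x^5 + 7852320*x^6 + 214400*x^7 + 2560*x^8) by pospoly. lra. }
  lra.
Qed.

Lemma Q3 N : 10 <= N -> f0 N (8 / (4 * N + 1)) <= - (1 / (20 * N ^ 3)).
Proof.
  intro HN. set (x := N - 10). replace N with (x + 10) by (unfold x; ring).
  assert (Hx : 0 <= x) by (unfold x; lra). clearbody x.
  assert (E : - (1 / (20 * (x+10) ^ 3)) - f0 (x+10) (8 / (4 * (x+10) + 1)) =
     (14345871 + 7679767*x + 1635178*x^2 + 173226*x^3 + 9136*x^4 + 192*x^5) /
     (302882580000 + 237409434000*x + 81400315400*x^2 + 15945634380*x^3 + 1951921860*x^4 + 152892840*x^5 + 7483680*x^6 + 209280*x^7 + 2560*x^8)).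
  { unfold f0, K2, D2. field. repeat split; try nra. }
  assert (0 <= (14345871 + 7679767*x + 1635178*x^2 + 173226*x^3 + 9136*x^4 + 192*x^5) /
     (302882580000 + 237409434000*x + 81400315400*x^2 + 15945634380*x^3 + 1951921860*x^4 + 152892840*x^5 + 7483680*x^6 + 209280*x^7 + 2560*x^8)).
  { unfold Rdiv. apply Rmult_le_pos. pospoly. apply Rlt_le, Rinv_0_lt_compat.
    assert (0 <= 237409434000*x + 81400315400*x^2 + 15945634380*x^3 + 1951921860*x^4 + 152892840*x^5 + 7483680*x^6 + 209280*x^7 + 2560*x^8) by pospoly. lra. }
  lra.
Qed.

Lemma final_ineq N e bb : 10 <= N -> 20 * bb ^ 2 <= N -> 8 / (4 * N + 5) <= e <= 8 / (4 * N + 1) ->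
  e ^ 2 * (K2 N + bb ^ 2 / 4 * Mb2 N) - e + (1 + e / 2) * D2 N <= 0.
Proof.
  intros HN Hb [He1 He2].
  set (e1 := 8 / (4 * N + 5)) in *. set (e2 := 8 / (4 * N + 1)) in *.
  assert (H1 := Q2 N HN). assert (H2 := Q3 N HN). fold e1 in H1. fold e2 in H2.
  assert (HK : 0 < K2 N) by (unfold K2; apply Rdiv_lt_0_compat; nra).
  assert (He12 : e1 < e2) by (unfold e1, e2; apply Rmult_lt_compat_l; [lra|]; apply Rinv_lt_contravar; nra).
  assert (Hid : (e2 - e1) * f0 N e = (e2 - e) * f0 N e1 + (e - e1) * f0 N e2 + K2 N * (e - e1) * (e - e2) * (e2 - e1)).
  { unfold f0. clear. field. }
  set (c := 1 / (20 * N ^ 3)) in *.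
  assert (Hf : f0 N e <= - c).
  { assert (K2 N * (e - e1) * (e - e2) * (e2 - e1) <= 0).
    { assert (0 <= K2 N * (e - e1) * (e2 - e) * (e2 - e1)) by (apply Rmult_le_pos; [apply Rmult_le_pos; [apply Rmult_le_pos|]|]; lra).
      replace (K2 N * (e - e1) * (e - e2) * (e2 - e1)) with (- (K2 N * (e - e1) * (e2 - e) * (e2 - e1))) by ring. lra. }
    assert ((e2 - e1) * f0 N e <= (e2 - e1) * (- c)) by nra.
    apply Rmult_le_reg_l with (e2 - e1); lra. }
  assert (HM := Q1 N HN).
  assert (Hepos : 0 < e) by (assert (0 < e1) by (unfold e1; apply Rdiv_lt_0_compat; lra); lra).
  assert (Hee : e <= 2 / N).
  { apply Rle_trans with e2; auto. unfold e2. apply Rmult_le_reg_r with ((4*N+1) * N). nra.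
    field_simplify; try lra. }
  assert (Hmag : e ^ 2 * (bb ^ 2 / 4 * Mb2 N) <= c).
  { apply Rle_trans with ((2/N)^2 * (bb^2/4 * (1 / N^2))).
    - assert (0 <= bb^2) by nra.
      assert (e^2 <= (2/N)^2) by (apply pow_incr; lra).
      assert (bb ^ 2 / 4 * Mb2 N <= bb ^ 2 / 4 * (1 / N ^ 2)) by (apply Rmult_le_compat_l; lra).
      destruct (Rle_lt_dec 0 (bb ^ 2 / 4 * Mb2 N)).
      + apply Rmult_le_compat; try lra. apply pow_le; lra.
      + assert (0 <= (2/N)^2 * (bb ^ 2 / 4 * (1 / N ^ 2))).
        { apply Rmult_le_pos. apply pow_le. apply Rlt_le, Rdiv_lt_0_compat; lra.
          apply Rmult_le_pos. lra. apply Rlt_le, Rdiv_lt_0_compat; [lra|]. apply pow_lt; lra. }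
        assert (e ^ 2 * (bb ^ 2 / 4 * Mb2 N) <= 0). { assert (0 <= e^2) by (apply pow_le; lra). nra. }
        lra.
    - unfold c. apply Rmult_le_reg_r with (20 * N^4). apply Rmult_lt_0_compat; [lra| apply pow_lt; lra].
      field_simplify; try lra; try nra. }
  unfold f0 in Hf. nra.
Qed.

Lemma int_disk_ext f g : (forall x y, f x y = g x y) -> int_disk f = int_disk g.
Proof. intro H. unfold int_disk. apply RInt_ext. intros. apply RInt_ext. intros. apply H. Qed.

Ltac fold_INR := repeat match goal with |- context [match ?j with 0%nat => 1 | S _ => INR ?j + 1 end] =>
   change (match j with 0%nat => 1 | S _ => INR j + 1 end) with (INR (S j)) end.

Lemma Den_eq b m : int_disk (fun x y => Cmod (ut b (S m) x y) ^ 2) = 2 * J (3 + 2*m) - J (4 + 2*m).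
Proof.
  set (k := (2 * m)%nat).
  rewrite (int_disk_ext _ (fun x y => (1 + y) ^ (2 + k) + x ^ 2 * 0)).
  2:{ intros. rewrite ut_mod. replace (2 * S m)%nat with (2 + k)%nat by (unfold k; lia). ring. }
  assert (INR (3 + k) <> 0) by (apply not_0_INR; lia).
  rewrite (disk (fun y => (1 + y) ^ (2 + k)) (fun _ => 0) (fun y => (1 + y) ^ (3 + k) / INR (3 + k)) (fun _ => 0)).
  - transitivity (LJ ((2, (3 + k)%nat) :: (-1, (4 + k)%nat) :: nil)).
    2:{ simpl. ring. }
    rewrite <- RInt_LC. apply RInt_ext. intros t _. unfold Tf, LC, Pk.
      replace (1 + - sin t) with (1 - sin t) by ring. simpl pow.
      pose proof (sin2_cos2 t) as Hsc. unfold Rsqr in Hsc.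
      set (s := sin t) in *. set (c := cos t) in *. set (A := (1 + s) ^ k). set (B := (1 - s) ^ k).
      nsatz.
  - intros y. auto_derive; auto. fold_INR. rewrite ?S_INR. simpl pow.
    assert (0 <= INR k) by apply pos_INR. rewrite ?plus_INR. simpl INR. field. lra.
  - intros y. auto_derive; auto; try ring.
  - intros y. auto_derive; auto.
  - intros y. auto_derive; auto.
Qed.

Lemma Bd_eq b m : int_circle (fun x y => Cmod (ut b (S m) x y) ^ 2) = J (2 + 2*m).
Proof.
  unfold int_circle. rewrite <- circle_pow. apply RInt_ext. intros. rewrite ut_mod.
  replace (2 * S m)%nat with (2 + 2 * m)%nat by lia. reflexivity.
Qed.

Lemma Mag_eq b m : let k := (2 * m)%nat in let N := INR (S m) in
  int_disk (mag_grad_sq b (ut b (S m))) =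
  LJ ((2 * N^2, (1 + k)%nat) :: (- N^2, (2 + k)%nat) :: (b^2/4 * 8, (3 + k)%nat) ::
      (b^2/4 * (-32/3), (4 + k)%nat) :: (b^2/4 * (14/3), (5 + k)%nat) :: (b^2/4 * (-2/3), (6 + k)%nat) :: nil).
Proof.
  intros k N.
  rewrite (int_disk_ext _ (fun x y => (N^2 * (1 + y) ^ k + b^2/4 * (1 - y)^2 * (1+y)^(2+k)) + x ^ 2 * (b^2/4 * (1+y)^(2+k)))).
  2:{ intros. rewrite mag_eq by lia. replace (2 * S m - 2)%nat with k by (unfold k; lia).
      replace (2 * S m)%nat with (2 + k)%nat by (unfold k; lia). unfold N. ring. }
  assert (HK : 0 <= INR k) by apply pos_INR.
  rewrite (disk (fun y => N^2 * (1 + y) ^ k + b^2/4 * (1 - y)^2 * (1+y)^(2+k)) (fun y => b^2/4 * (1+y)^(2+k))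
    (fun y => N^2 * ((1 + y) ^ (1 + k) / INR (1 + k)) + b^2/4 * (4 * ((1+y)^(3+k) / INR (3+k)) - 4 * ((1+y)^(4+k) / INR (4+k)) + (1+y)^(5+k) / INR (5+k)))
    (fun y => b^2/4 * ((1+y)^(3+k) / INR (3+k)))).
  - rewrite <- RInt_LC. apply RInt_ext. intros t _. unfold Tf, LC, Pk.
    replace (1 + - sin t) with (1 - sin t) by ring. replace (1 - - sin t) with (1 + sin t) by ring. simpl pow.
    pose proof (sin2_cos2 t) as Hsc. unfold Rsqr in Hsc.
    set (s := sin t) in *. set (c := cos t) in *. set (A := (1 + s) ^ k). set (B := (1 - s) ^ k).
    replace (c * (c * (c * (c * 1)))) with ((1 - s*s)*(1 - s*s)) by (clear - Hsc; nra).
    replace (c * (c * 1)) with (1 - s*s) by (clear - Hsc; nra).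
    match goal with |- ?a = ?b => change (@eq R a b) end. field.
  - intros y. auto_derive; auto. fold_INR. rewrite ?S_INR. simpl pow. field. lra.
  - intros y. auto_derive; auto. fold_INR. rewrite ?S_INR. simpl pow. field. lra.
  - intros y. auto_derive; auto.
  - intros y. auto_derive; auto.
Qed.

Lemma Jvals m : let k := (2 * m)%nat in let x := INR m in
  J (1 + k) = (2*x+2) * J (2 + k) / (4*x+3) /\
  J (3 + k) = (4*x+5) * J (2 + k) / (2*x+3) /\
  J (4 + k) = (4*x+7) * J (3 + k) / (2*x+4) /\
  J (5 + k) = (4*x+9) * J (4 + k) / (2*x+5) /\
  J (6 + k) = (4*x+11) * J (5 + k) / (2*x+6).
Proof.
  intros k x.
  assert (Hx : 0 <= x) by apply pos_INR.
  assert (Hk : INR k = 2 * x) by (unfold k, x; rewrite mult_INR; simpl; ring).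
  assert (R1 := Jrec' (1 + k) ltac:(lia)). change (J (S (1 + k))) with (J (2 + k)) in R1.
  replace (INR (1 + k + 1)) with (2*x+2) in R1 by (rewrite !plus_INR, Hk; simpl; ring).
  replace (INR (2 * (1 + k) + 1)) with (4*x+3) in R1 by (rewrite !plus_INR, mult_INR, plus_INR, Hk; simpl; ring).
  assert (R3 := Jrec' (2 + k) ltac:(lia)). change (J (S (2 + k))) with (J (3 + k)) in R3.
  replace (INR (2 + k + 1)) with (2*x+3) in R3 by (rewrite !plus_INR, Hk; simpl; ring).
  replace (INR (2 * (2 + k) + 1)) with (4*x+5) in R3 by (rewrite !plus_INR, mult_INR, plus_INR, Hk; simpl; ring).
  assert (R4 := Jrec' (3 + k) ltac:(lia)). change (J (S (3 + k))) with (J (4 + k)) in R4.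
  replace (INR (3 + k + 1)) with (2*x+4) in R4 by (rewrite !plus_INR, Hk; simpl; ring).
  replace (INR (2 * (3 + k) + 1)) with (4*x+7) in R4 by (rewrite !plus_INR, mult_INR, plus_INR, Hk; simpl; ring).
  assert (R5 := Jrec' (4 + k) ltac:(lia)). change (J (S (4 + k))) with (J (5 + k)) in R5.
  replace (INR (4 + k + 1)) with (2*x+5) in R5 by (rewrite !plus_INR, Hk; simpl; ring).
  replace (INR (2 * (4 + k) + 1)) with (4*x+9) in R5 by (rewrite !plus_INR, mult_INR, plus_INR, Hk; simpl; ring).
  assert (R6 := Jrec' (5 + k) ltac:(lia)). change (J (S (5 + k))) with (J (6 + k)) in R6.
  replace (INR (5 + k + 1)) with (2*x+6) in R6 by (rewrite !plus_INR, Hk; simpl; ring).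
  replace (INR (2 * (5 + k) + 1)) with (4*x+11) in R6 by (rewrite !plus_INR, mult_INR, plus_INR, Hk; simpl; ring).
  repeat split; field_simplify_eq; try lra.
Qed.

Lemma Rpower32 h : 0 < h -> Rpower h (3/2) = h * sqrt h.
Proof.
  intro Hh. replace (3/2) with (1 + / 2) by field. rewrite Rpower_plus, Rpower_1 by auto.
  rewrite Rpower_sqrt by auto. reflexivity.
Qed.

Lemma main_bound b m h : 10 <= INR (S m) -> 20 * b^2 <= INR (S m) -> 0 < h ->
  8 / (4 * INR (S m) + 5) <= sqrt h <= 8 / (4 * INR (S m) + 1) ->
  0 < int_disk (fun x y => Cmod (ut b (S m) x y) ^ 2) /\
  rayleigh h b (ut b (S m)) <= - h - / 2 * Rpower h (3 / 2).
Proof.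
  intros HN Hb Hh He.
  set (N := INR (S m)) in *.
  assert (HNx : N = INR m + 1) by (unfold N; rewrite S_INR; ring).
  destruct (Jvals m) as [E1 [E3 [E4 [E5 E6]]]].
  set (x := INR m) in *. set (k := (2 * m)%nat) in *.
  assert (Hx : 9 <= x) by lra.
  set (B0 := J (2 + k)).
  assert (HB0 : 0 < B0) by apply Jpos.
  assert (HDen : int_disk (fun x y => Cmod (ut b (S m) x y) ^ 2) = B0 * D2 N).
  { rewrite Den_eq. fold k. rewrite E4, E3. unfold D2. rewrite HNx. unfold B0. field. lra. }
  assert (HD2 : 0 < D2 N) by (unfold D2; apply Rdiv_lt_0_compat; nra).
  split. rewrite HDen. apply Rmult_lt_0_compat; auto.
  assert (HMag : int_disk (mag_grad_sq b (ut b (S m))) = B0 * (K2 N + b^2/4 * Mb2 N)).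
  { rewrite Mag_eq. fold k. fold N. cbn [LJ]. rewrite E6, E5, E4, E3, E1. unfold B0.
    unfold K2, Mb2, a6, a5, a4, a3. rewrite HNx. field. lra. }
  assert (HBd : int_circle (fun x y => Cmod (ut b (S m) x y) ^ 2) = B0).
  { rewrite Bd_eq. reflexivity. }
  unfold rayleigh. rewrite HDen, HMag, HBd, Rpower32 by auto.
  set (e := sqrt h) in *.
  assert (Hhe : h = e * e) by (unfold e; rewrite sqrt_sqrt; lra).
  assert (He0 : 0 < e) by (unfold e; apply sqrt_lt_R0; auto).
  assert (HF := final_ineq N e b HN Hb He).
  rewrite Hhe. 
  apply Rmult_le_reg_r with (B0 * D2 N). apply Rmult_lt_0_compat; auto.
  unfold Rdiv. rewrite Rmult_assoc, Rinv_l, Rmult_1_r.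
  2:{ apply Rgt_not_eq, Rmult_lt_0_compat; auto. }
  assert (0 <= e * e * B0) by (apply Rmult_le_pos; [nra | lra]).
  assert (Hp : e * e * B0 * (e ^ 2 * (K2 N + b^2/4 * Mb2 N) - e + (1 + e / 2) * D2 N) <= 0).
  { apply Rmult_le_0_l; auto. }
  assert (Hid : (e*e)^2 * (B0*(K2 N + b^2 * /4 * Mb2 N)) - e*e*e*B0 - (-(e*e) - /2*(e*e*e))*(B0*D2 N)
     = e * e * B0 * (e ^ 2 * (K2 N + b^2/4 * Mb2 N) - e + (1 + e / 2) * D2 N)) by field.
  lra.
Qed.

Lemma choose_n e T : 0 < e -> 1 <= T -> e <= 8 / (4 * T + 5) ->
  exists m : nat, T <= INR (S m) /\ 8 / (4 * INR (S m) + 5) <= e <= 8 / (4 * INR (S m) + 1).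
Proof.
  intros He HT HeT.
  set (r := (8 / e - 1) / 4).
  assert (Her : e * (4 * r + 1) = 8) by (unfold r; field; lra).
  assert (HrT : T + 1 <= r).
  { assert (e * (4 * T + 5) <= 8).
    { apply Rmult_le_reg_r with (/ (4 * T + 5)). apply Rinv_0_lt_compat; lra.
      rewrite Rmult_assoc, Rinv_r by lra. lra. }
    nra. }
  destruct (archimed r) as [Hz1 Hz2].
  set (z := up r) in *.
  assert (Hz : (3 <= z)%Z). { apply le_IZR. simpl. assert (2 < IZR z) by lra.
    assert (2 < z)%Z by (apply lt_IZR; simpl; lra). apply IZR_le. lia. }
  exists (pred (Z.to_nat (z - 1))).
  assert (HN : INR (S (pred (Z.to_nat (z - 1)))) = IZR z - 1).
  { replace (S (pred (Z.to_nat (z - 1)))) with (Z.to_nat (z - 1)) by lia.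
    rewrite INR_IZR_INZ, Z2Nat.id by lia. rewrite minus_IZR. reflexivity. }
  rewrite HN. split; [lra|split].
  - apply Rmult_le_reg_r with (4 * (IZR z - 1) + 5). lra.
    unfold Rdiv. rewrite Rmult_assoc, Rinv_l, Rmult_1_r by lra. nra.
  - apply Rmult_le_reg_r with (4 * (IZR z - 1) + 1). lra.
    unfold Rdiv. rewrite Rmult_assoc, Rinv_l, Rmult_1_r by lra. nra.
Qed.

Theorem lemma2p2 (b : R) (hb : 0 < b) :
  exists h0 : R, 0 < h0 < 1 /\
    forall h : R, 0 < h < h0 ->
      Rbar_le (mu1 h b) (Finite (- h - / 2 * Rpower h (3 / 2))).
Proof.
  set (T := 10 + 20 * b ^ 2).
  assert (HT : 10 <= T) by (unfold T; nra).
  exists ((8 / (4 * T + 5)) ^ 2). split.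
  { split. apply pow_lt. apply Rdiv_lt_0_compat; lra.
    assert (0 < 8 / (4 * T + 5) < 1).
    { split. apply Rdiv_lt_0_compat; lra. apply Rmult_lt_reg_r with (4 * T + 5). lra.
      unfold Rdiv. rewrite Rmult_assoc, Rinv_l, Rmult_1_r by lra. lra. }
    simpl. nra. }
  intros h [Hh Hh0].
  set (e := sqrt h).
  assert (He : 0 < e) by (apply sqrt_lt_R0; auto).
  assert (HeT : e <= 8 / (4 * T + 5)).
  { assert (0 < 8 / (4 * T + 5)) by (apply Rdiv_lt_0_compat; lra).
    unfold e. rewrite <- (sqrt_pow2 (8 / (4 * T + 5))) by lra. apply sqrt_le_1_alt. lra. }
  destruct (choose_n e T He ltac:(lra) HeT) as [m [HmT Hme]].
  destruct (main_bound b m h ltac:(lra) ltac:(unfold T in HmT; lra) Hh Hme) as [Hpos Hray].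
  unfold mu1.
  destruct (Glb_Rbar_correct (fun q => exists u : R -> R -> C,
    admissible u /\ 0 < int_disk (fun x y => (Cmod (u x y)) ^ 2) /\ q = rayleigh h b u)) as [Hlb _].
  apply Rbar_le_trans with (Finite (rayleigh h b (ut b (S m)))).
  - apply Hlb. exists (ut b (S m)). split; [apply adm | split; [exact Hpos | reflexivity]].
  - simpl. exact Hray.
Qed.
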